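(* Let $\alpha,\beta\in R$ with $\beta$ a long root and $(\alpha,\beta)=0$. Then there exist $\gamma,\gamma'\in R$ with $\gamma\notin\{\alpha,\beta\}$ such that $\alpha+\beta=\gamma+\gamma'$.
   Context: $R$ is the root system of a complex simple Lie algebra, with $(\cdot,\cdot)$ the invariant form induced by the Killing form; in the simply laced case all roots are long. *)

(* Defs.v *)
From HB Require Import structures.
From mathcomp Require Import all_boot all_order all_algebra.
Set Implicit Arguments. Unset Strict Implicit. Unset Printing Implicit Defensive.
Import Order.TTheory GRing.Theory Num.Theory.
Local Open Scope ring_scope.

Definition dot (F : realFieldType) (n : nat) (u v : 'rV[F]_n) : F :=
  \sum_(i < n) u 0 i * v 0 i.

Definition cartan (F : realFieldType) (n : nat) (b a : 'rV[F]_n) : F :=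
  2 * dot b a / dot a a.

(* R is an irreducible reduced crystallographic root system in F^n,
   i.e. the root system of a complex simple Lie algebra. *)
Definition irred_root_system (F : realFieldType) (n : nat) (R : seq 'rV[F]_n) : Prop :=
  R != [::] /\ (0 : 'rV[F]_n) \notin R /\
  [/\ (forall v : 'rV[F]_n, exists c : nat -> F,
          v = \sum_(i < size R) c i *: R`_i),
      (forall a b, a \in R -> b \in R -> b - cartan b a *: a \in R),
      (forall a b, a \in R -> b \in R -> exists k : int, cartan b a = k%:~R),
      (forall a (c : F), a \in R -> c *: a \in R -> c = 1 \/ c = -1)
    & (forall P : pred 'rV[F]_n,
          (forall a b, a \in R -> b \in R -> P a -> ~~ P b -> dot a b = 0) ->
          all P R \/ all (predC P) R)].

Definition long_root (F : realFieldType) (n : nat) (R : seq 'rV[F]_n) (b : 'rV[F]_n) : Prop :=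
  b \in R /\ forall a, a \in R -> dot a a <= dot b b.

(* Main.v *)
Require Import Defs.
From HB Require Import structures.
From mathcomp Require Import all_boot all_order all_algebra.
Import Order.TTheory GRing.Theory Num.Theory.
Local Open Scope ring_scope.

Section D.
Context {F : realFieldType} {n : nat}.
Implicit Types u v w : 'rV[F]_n.

Lemma dotC u v : dot u v = dot v u.
Proof. by rewrite /dot; apply: eq_bigr => i _; rewrite mulrC. Qed.

Lemma dotDl u v w : dot (u + v) w = dot u w + dot v w.
Proof. by rewrite /dot -big_split; apply: eq_bigr => i _; rewrite mxE mulrDl. Qed.

Lemma dotZl (c : F) u w : dot (c *: u) w = c * dot u w.
Proof. by rewrite /dot mulr_sumr; apply: eq_bigr => i _; rewrite mxE mulrA. Qed.

Lemma dotNl u w : dot (- u) w = - dot u w.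
Proof. by rewrite -scaleN1r dotZl mulN1r. Qed.

Lemma dotBl u v w : dot (u - v) w = dot u w - dot v w.
Proof. by rewrite dotDl dotNl. Qed.

Lemma dotDr u v w : dot w (u + v) = dot w u + dot w v.
Proof. by rewrite !(dotC w) dotDl. Qed.
Lemma dotZr (c : F) u w : dot w (c *: u) = c * dot w u.
Proof. by rewrite !(dotC w) dotZl. Qed.
Lemma dotNr u w : dot w (- u) = - dot w u.
Proof. by rewrite !(dotC w) dotNl. Qed.
Lemma dotBr u v w : dot w (u - v) = dot w u - dot w v.
Proof. by rewrite dotDr dotNr. Qed.

Lemma dot_ge0 u : 0 <= dot u u.
Proof. by apply: sumr_ge0 => i _; rewrite -expr2 sqr_ge0. Qed.

Lemma dot_eq0 u : dot u u = 0 -> u = 0.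
Proof.
move=> h; apply/matrixP => i j; rewrite mxE (ord1 i).
have H0 : forall k : 'I_n, true -> 0 <= u 0 k * u 0 k.
  by move=> k _; rewrite -expr2 sqr_ge0.
have := psumr_eq0P H0 h (i := j) isT.
by move/eqP; rewrite mulf_eq0 orbb => /eqP.
Qed.

Lemma dot_gt0 u : u != 0 -> 0 < dot u u.
Proof.
move=> nz; rewrite lt_def dot_ge0 andbT; apply/eqP => /dot_eq0 h.
by rewrite h eqxx in nz.
Qed.
End D.

Section RS.
Variables (F : realFieldType) (n : nat) (R : seq 'rV[F]_n).
Hypothesis HR : irred_root_system R.

Lemma root_nz {x} : x \in R -> x != 0.
Proof. by case: HR => _ [h _] xR; apply: contraNneq h => <-. Qed.

Lemma root_gt0 {x} : x \in R -> 0 < dot x x.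
Proof. by move=> /root_nz; apply: dot_gt0. Qed.

Lemma root_neq0 {x} : x \in R -> dot x x != 0.
Proof. by move=> /root_gt0 /lt0r_neq0. Qed.

Lemma refl_root {x y} : x \in R -> y \in R -> x - cartan x y *: y \in R.
Proof. by move=> xR yR; case: HR => _ [_ [_ h _ _ _]]; exact: h yR xR. Qed.

Lemma cartan_int {x y} : x \in R -> y \in R -> exists k : int, cartan x y = k%:~R.
Proof. by move=> xR yR; case: HR => _ [_ [_ _ h _ _]]; exact: h yR xR. Qed.

Lemma reduced {x} {c : F} : x \in R -> c *: x \in R -> c = 1 \/ c = -1.
Proof. by move=> xR cR; case: HR => _ [_ [_ _ _ h _]]; exact: h x c xR cR. Qed.

Lemma cartan_mul {x y} : y \in R -> cartan x y * dot y y = 2 * dot x y.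
Proof. by move=> yR; rewrite /cartan divfK // root_neq0. Qed.

Lemma neg_root {x} : x \in R -> - x \in R.
Proof.
move=> xR; have := refl_root xR xR.
have -> : cartan x x = 2 by rewrite /cartan mulfK // root_neq0.
by rewrite scaler_nat mulr2n opprD addrA subrr add0r.
Qed.

Lemma strict_cs {u v} : u \in R -> v \in R -> u != v -> u != - v ->
  dot u v * dot u v < dot u u * dot v v.
Proof.
move=> uR vR nuv nuv'.
set t := dot u v / dot v v.
have hw : u - t *: v != 0.
  apply/negP; rewrite subr_eq0 => /eqP hu.
  have := uR; rewrite hu => /(reduced vR) [] ht; move: hu; rewrite ht.
    by rewrite scale1r => hu; rewrite hu eqxx in nuv.
  by rewrite scaleN1r => hu; rewrite hu eqxx in nuv'.
have h1 : dot v (u - t *: v) = 0.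
  by rewrite dotBr dotZr /t divfK ?root_neq0 // dotC subrr.
have h2 : dot (u - t *: v) (u - t *: v) = dot u u - t * dot u v.
  by rewrite dotBl dotZl h1 mulr0 subr0 dotBr dotZr.
have := dot_gt0 _ hw; rewrite h2 subr_gt0 /t mulrAC ltr_pdivrMr //.
exact: root_gt0.
Qed.

Lemma cartan_case {x y} : x \in R -> y \in R -> dot x y < 0 ->
  cartan x y = -1 \/ dot x y <= - dot y y.
Proof.
move=> xR yR neg; have yp := root_gt0 yR.
have [k hk] := cartan_int xR yR; move: hk; rewrite /cartan.
case: k => [m|[|m]] hk.
- have : 0 <= 2 * dot x y / dot y y by rewrite hk ler0n.
  rewrite ler_pdivlMr // mul0r pmulr_rge0 // => h.
  by have := lt_le_trans neg h; rewrite ltxx.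
- by left; rewrite hk NegzE mulrNz.
- right; have : 2 * dot x y / dot y y <= - 2.
    rewrite hk NegzE mulrNz lerN2.
    by rewrite pmulrn ler_nat.
  rewrite ler_pdivrMr // mulNr -mulrN.
  by rewrite ler_pM2l // ltr0n.
Qed.

Lemma sum_root {u v} : u \in R -> v \in R -> dot u v < 0 -> u != - v ->
  u + v \in R.
Proof.
move=> uR vR neg nuv.
have nuv' : u != v.
  by apply: contraTneq neg => ->; rewrite -leNgt dot_ge0.
have cs := strict_cs uR vR nuv' nuv.
have neg' : dot v u < 0 by rewrite dotC.
case: (cartan_case uR vR neg) => [h|h1].
  by have := refl_root uR vR; rewrite h scaleN1r opprK.
case: (cartan_case vR uR neg') => [h|h2].
  by have := refl_root vR uR; rewrite h scaleN1r opprK addrC.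
rewrite dotC in h2.
have : dot u u * dot v v <= (- dot u v) * (- dot u v).
  rewrite mulrC; apply: ler_pM; rewrite ?dot_ge0 //.
    by rewrite lerNr.
  by rewrite lerNr.
by rewrite mulrNN leNgt cs.
Qed.

Lemma irred_common a b : a \in R -> b \in R ->
  exists2 z, z \in R & (dot z a != 0) && (dot z b != 0).
Proof.
move=> aR bR.
pose P := fun y => has (fun z => (dot z a != 0) && (dot z y != 0)) R.
have two : (2 : F) != 0 by rewrite pnatr_eq0.
have clos : forall x y, x \in R -> y \in R -> P x -> ~~ P y -> dot x y = 0.
  move=> x y xR yR Px nPy; apply/eqP; apply: contraNT nPy => hxy.
  case/hasP: Px => z zR /andP [hza hzx].
  have [hzy|hzy] := eqVneq (dot z y) 0; last first.
    by apply/hasP; exists z => //; rewrite hza hzy.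
  have [hxa|hxa] := eqVneq (dot x a) 0; last first.
    by apply/hasP; exists x => //; rewrite hxa hxy.
  apply/hasP; exists (z - cartan z x *: x); first exact: refl_root.
  rewrite !dotBl !dotZl hxa mulr0 subr0 hza /= hzy sub0r oppr_eq0.
  rewrite mulf_neq0 // /cartan mulf_neq0 ?invr_eq0 ?root_neq0 //.
  by rewrite mulf_neq0.
case: HR => _ [_ [_ _ _ _ irr]].
case: (irr P clos) => /allP h.
  have := h b bR; case/hasP => z zR /andP [h1 h2]; exists z => //.
  by rewrite h1 h2.
move: (h a aR) => /= /hasPn /(_ a aR).
by rewrite root_neq0.
Qed.
End RS.

Arguments root_nz {F n R} HR {x}.
Arguments root_gt0 {F n R} HR {x}.
Arguments refl_root {F n R} HR {x y}.
Arguments cartan_mul {F n R} HR {x y}.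
Arguments neg_root {F n R} HR {x}.
Arguments sum_root {F n R} HR {u v}.
Arguments irred_common {F n R} HR {a b}.

Theorem lemma2p5 (F : realFieldType) (n : nat) (R : seq 'rV[F]_n)
  (a b : 'rV[F]_n) :
  irred_root_system R -> a \in R -> b \in R -> long_root R b ->
  dot a b = 0 ->
  exists g g' : 'rV[F]_n,
    [/\ g \in R, g' \in R, g \notin [:: a; b] & a + b = g + g'].
Proof.
move=> HR aR bR [_ hlong] hab.
have hba : dot b a = 0 by rewrite dotC.
have [z zR /andP [hza hzb]] := irred_common HR aR bR.
pose w := z - cartan z a *: a.
have wR : w \in R by exact: (refl_root HR).
have hwa : dot w a = - dot z a.
  rewrite /w dotBl dotZl (cartan_mul HR) // -mulr_natl mulr2n mulrDl mul1r.
  by rewrite mulrDl mul1r opprD addrA subrr add0r.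
have hwb : dot w b = dot z b by rewrite /w dotBl dotZl hab mulr0 subr0.
have [y yR hy] : exists2 y, y \in R & dot y a * dot y b < 0.
  have hp : dot z a * dot z b != 0 by rewrite mulf_neq0.
  case: (ltgtP (dot z a * dot z b) 0) => [h|h|h].
  - by exists z.
  - by exists w => //; rewrite hwa hwb mulNr oppr_lt0.
  - by rewrite h eqxx in hp.
have [d dR [hda hdb]] : exists2 d, d \in R & (dot d a < 0 /\ 0 < dot d b).
  case: (ltgtP (dot y a) 0) => [h|h|h].
  - exists y => //; split => //.
    by move: hy; rewrite nmulr_rlt0.
  - exists (- y); first exact: (neg_root HR).
    rewrite dotNl dotNl oppr_lt0 oppr_gt0; split => //.
    by move: hy; rewrite pmulr_rlt0.
  - by move: hy; rewrite h mul0r ltxx.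
have dnz : d != 0 by apply: (root_nz HR).
exists (a + d), (b - d); split.
- apply: (sum_root HR) => //; first by rewrite dotC.
  apply: contraTneq hdb => ha; by rewrite -[d]opprK -ha dotNl hab oppr0 ltxx.
- apply: (sum_root HR) => //; first exact: (neg_root HR).
    by rewrite dotNr dotC oppr_lt0.
  rewrite opprK; apply: contraTneq hda => <-; by rewrite hba ltxx.
- rewrite !inE negb_or; apply/andP; split.
    by rewrite -subr_eq0 addrC addKr.
  apply/eqP => hb.
  have hd : d = b - a by rewrite -hb (addrC a) addrK.
  have := hlong d dR; rewrite hd dotBl !dotBr hab hba !subr0 opprB addrC.
  by rewrite subr0 -lerBrDr subrr leNgt (root_gt0 HR aR).
- by rewrite addrACA subrr addr0.
Qed.
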